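(* Let $P$ be a probability measure on a measurable space $(\Omega,\mathcal{M})$. Let $\Lambda:[0,\infty)\to[0,\infty]$ satisfy $\Lambda(0)=0$, be finite on a neighborhood of $0$, and be differentiable from the right at $0$ with right-derivative $\eta$. Then $$\mathcal{U}^\Lambda(P)\subset\{Q:\ R(Q\|P)\le\eta\}.$$
   Context: For probability measures $P,Q$ on $(\Omega,\mathcal{M})$, the relative entropy is $R(Q\|P)=\int\log(dQ/dP)\,dQ$ if $Q\ll P$ and $+\infty$ otherwise. For a probability measure $Q$ and a measurable $f:\Omega\to\overline{\mathbb{R}}$, the cumulant generating function is $\Lambda_Q^f(\lambda)=\log E_Q[e^{\lambda f}]$. For $\Lambda:[0,\infty)\to[0,\infty]$ with $\Lambda(0)=0$ and finite on a neighborhood of $0$, the ambiguity set is $\mathcal{U}^\Lambda(P)=\{Q \text{ probability measure}: Q\ll P,\ \Lambda_Q^{\log(dQ/dP)}(\lambda)\le\Lambda(\lambda)\ \text{for all }\lambda>0\}$. *)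

(* Defs.v *)
From HB Require Import structures.
From mathcomp Require Import all_boot all_order all_algebra.
From mathcomp Require Import all_classical all_reals all_analysis.
Set Implicit Arguments. Unset Strict Implicit. Unset Printing Implicit Defensive.
Import Order.TTheory GRing.Theory Num.Theory.
Local Open Scope classical_set_scope.
Local Open Scope ring_scope.
Local Open Scope ereal_scope.

(* Radon-Nikodym derivative dQ/dP of a probability Q w.r.t. a probability P
   (meaningful when Q `<< P; defined P-a.e., hence Q-a.e.). *)
Definition dens d (T : measurableType d) (R : realType)
  (P Q : probability T R) : T -> \bar R :=
  Radon_Nikodym (charge_of_finite_measure Q) P.

(* log-likelihood ratio log(dQ/dP), with log t = -oo for t <= 0 *)
Definition loglr d (T : measurableType d) (R : realType)
  (P Q : probability T R) : T -> \bar R := fun x => lne (dens P Q x).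

Definition relent d (T : measurableType d) (R : realType)
  (Q P : probability T R) : \bar R :=
  if pselect (Q `<< P) then \int[Q]_x loglr P Q x else +oo.

Definition cgf d (T : measurableType d) (R : realType)
  (Q : probability T R) (f : T -> \bar R) (l : R) : \bar R :=
  lne (\int[Q]_x expeR (l%:E * f x)).

Definition ambiguity_set d (T : measurableType d) (R : realType)
  (Lam : R -> \bar R) (P : probability T R) : set (probability T R) :=
  [set Q : probability T R | Q `<< P /\ forall l : R, (0 < l)%R -> cgf Q (loglr P Q) l <= Lam l].

(* Main.v *)
Require Import Defs.
From HB Require Import structures.
From mathcomp Require Import all_boot all_order all_algebra.
From mathcomp Require Import all_classical all_reals all_analysis measurable_realfun.
Import Order.TTheory GRing.Theory Num.Theory numFieldNormedType.Exports.
Local Open Scope classical_set_scope.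
Local Open Scope ring_scope.

From mathcomp Require Import ring lra.
Section aux.
Local Open Scope ereal_scope.
Context d (T : measurableType d) (R : realType).

Lemma meas_dens {P Q : probability T R} : Q `<< P ->
  measurable_fun [set: T] (dens P Q : T -> \bar R).
Proof.
move=> QP; have := @Radon_Nikodym_integrable _ _ _ (charge_of_finite_measure Q) P QP.
by move/integrableP => [].
Qed.

Lemma meas_loglr {P Q : probability T R} : Q `<< P ->
  measurable_fun [set: T] (loglr P Q : T -> \bar R).
Proof.
move=> QP; have md := meas_dens QP.
rewrite (_ : loglr P Q = fun x => if dens P Q x <= 0 then -oo
   else er_map (@ln R) (dens P Q x)); last first.
  apply: funext => x; rewrite /loglr; case: (dens P Q x) => [r||] /=.
  - by rewrite lee_fin; case: ifP.
  - done.
  - by case: ifP.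
apply: measurable_fun_ifT => //.
- apply: (measurable_fun_bool true).
  have := emeasurable_fun_infty_c measurableT md 0; rewrite setTI.
  by congr measurable; apply/seteqP; split => x /=.
- exact: (measurableT_comp (@measurable_er_map _ T R _ (@measurable_ln R)) md).
Qed.

Lemma meas_expeR (f : T -> \bar R) (l : R) : measurable_fun [set: T] f ->
  measurable_fun [set: T] (fun x => expeR (l%:E * f x)).
Proof.
move=> mf; have mg : measurable_fun setT (fun x => l%:E * f x).
  exact: measurable_funeM.
rewrite (_ : (fun x => _) = fun x => if l%:E * f x != -oo then
    er_map (@expR R) (l%:E * f x) else 0); last first.
  by apply: funext => x; case: (l%:E * f x).
apply: measurable_fun_ifT => //.
- apply: (measurable_fun_bool true).
  have := emeasurable_neq measurableT mg (-oo); rewrite setTI.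
  by congr measurable; apply/seteqP; split => x /=.
- apply: measurableT_comp => //; exact: (@measurable_er_map _ T R _ (@measurable_expR R)).
Qed.
End aux.
Section S. Local Open Scope ereal_scope. Context (R : realType).
Lemma subge0_le (x y : \bar R) : 0 <= y -> x - y <= x.
Proof.
case: x; case: y => //= [r s|r _]; last by rewrite addeNy leNye.
by rewrite lee_fin -EFinD lee_fin gerBl.
Qed.

Lemma lne_mono (c : R) (y : \bar R) : (0 < c)%R -> c%:E <= y -> (ln c)%:E <= lne y.
Proof.
case: y => [r||] c0 /=; [|by move=> _; rewrite leey|by rewrite leeNy_eq].
rewrite lee_fin => cr.
have r0 : (0 < r)%R by apply: lt_le_trans cr.
have -> : (r <= 0)%R = false by rewrite leNgt r0.
by rewrite lee_fin ler_ln ?posrE.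
Qed.

Lemma pt_jensen (l r : R) (x : \bar R) : (0 < l)%R ->
  (expR (l * r) * (1 - l * r))%:E + (expR (l * r) * l)%:E * x <= expeR (l%:E * x).
Proof.
move=> l0; case: x => [s||] /=.
- rewrite -EFinM -EFinD lee_fin.
  have := expR_ge1Dx (l * s - l * r).
  rewrite expRB ler_pdivlMr ?expR_gt0 // => h.
  by apply: le_trans h; rewrite le_eqVlt; apply/orP; left; apply/eqP; ring.
- rewrite gt0_muley ?lte_fin ?mulr_gt0 ?expR_gt0 //.
  by rewrite gt0_muley ?lte_fin.
- by rewrite gt0_muleNy ?lte_fin ?mulr_gt0 ?expR_gt0 // addeNy leNye.
Qed.

Lemma pt_pos (l : R) (x : \bar R) : (0 < l)%R ->
  l%:E * maxe x 0 <= expeR (l%:E * x).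
Proof.
move=> l0; case: x => [s||] /=.
- have -> : maxe s%:E 0 = (Num.max s 0)%:E by rewrite EFin_max.
  rewrite -EFinM lee_fin.
  have [s0|s0] := leP s 0%R.
    by rewrite mulr0 expR_ge0.
  by apply: le_trans (expR_ge1Dx _); rewrite lerDr.
- by rewrite maxye !gt0_muley ?lte_fin.
- by rewrite maxNye mule0 expeR_ge0.
Qed.
End S.

Theorem mainTheorem1 (d : measure_display) (T : measurableType d)
  (R : realType) (P : probability T R) (Lam : R -> \bar R) (eta : R) :
  (forall l : R, 0 <= l -> (0 <= Lam l)%E) ->
  Lam 0 = 0%E ->
  (exists e : R, 0 < e /\ forall l : R, 0 <= l < e -> (Lam l < +oo)%E) ->
  (fun h : R => fine (Lam h) / h) @ 0^'+ --> eta ->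
  ambiguity_set Lam P `<=` [set Q | (relent Q P <= eta%:E)%E].
Proof.
move=> Lam0 _ [e [e0 Lfin]] Hcvg Q [QP HQ] /=.
rewrite /relent; case: pselect => // QP' /=.
have mf := @meas_loglr _ _ _ P Q QP.
set f := loglr P Q in mf *.
have EI := integralE Q setT f.
have hp0 : (0 <= \int[Q]_x f^\+ x)%E by apply: integral_ge0 => x Hx; rewrite ?funeposE ?funenegE le_max lexx orbT.
have hn0 : (0 <= \int[Q]_x f^\- x)%E by apply: integral_ge0 => x Hx; rewrite ?funeposE ?funenegE le_max lexx orbT.
have mfp := measurable_funepos mf.
have mfn := measurable_funeneg mf.
case EIr: (\int[Q]_x f x)%E => [r| |]; last by rewrite leNye.
-
  have : (\int[Q]_x f x)%E \is a fin_num by rewrite EIr.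
  rewrite EI fin_numB => /andP[pfin nfin].
  have intf : Q.-integrable setT f.
    apply/integrableP; split => //.
    rewrite (_ : (fun x => `|f x|%E) = (f^\+ \+ f^\-)%E); last by rewrite -fune_abse.
    rewrite ge0_integralD // -ge0_fin_numE ?(fin_numD (\int[Q]_x f^\+ x)%E) ?pfin ?nfin // adde_ge0 //.
  have key : forall l, 0 < l < e -> r <= fine (Lam l) / l.
    move=> l /andP[l0 le].
    set c := expR (l * r).
    set g := fun x => ((c * (1 - l * r))%:E + (c * l)%:E * f x)%E.
    have intg : Q.-integrable setT g.
      apply: (integrableD measurableT).
        exact: (finite_measure_integrable_cst Q (c * (1 - l * r)) measurableT).
      exact: (integrableZl measurableT (c * l) intf).
    have Ig : (\int[Q]_x g x = c%:E)%E.
      rewrite /g (integralD measurableT); last first.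
        exact: (integrableZl measurableT).
        exact: (finite_measure_integrable_cst Q (c * (1 - l * r)) measurableT).
      rewrite (integral_cst Q measurableT) (integralZl measurableT) // EIr.
      transitivity ((c * (1 - l * r))%:E * 1 + (c * l)%:E * r%:E)%E.
        by congr (_ * _ + _)%E; exact: probability_setT.
      rewrite mule1.
      by rewrite -EFinM -EFinD; congr EFin; ring.
    have mg : measurable_fun setT g by case/integrableP: intg.
    have hle : (c%:E <= \int[Q]_x expeR (l%:E * f x))%E.
      rewrite -Ig (integralE Q setT g).
      have gn0 : (0 <= \int[Q]_x g^\- x)%E by apply: integral_ge0 => x Hx; rewrite funenegE le_max lexx orbT.
      apply: (le_trans (@subge0_le _ _ _ gn0)).
      apply: ge0_le_integral => //.
      - exact: measurable_funepos.
      - exact: meas_expeR.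
      - move=> x _; rewrite funeposE ge_max expeR_ge0 andbT; exact: pt_jensen.
    have := HQ l l0; rewrite /cgf.
    move=> HL.
    have := le_trans (@lne_mono _ _ _ (expR_gt0 _) hle) HL.
    rewrite expRK.
    have Lf : Lam l \is a fin_num.
      by rewrite ge0_fin_numE ?Lam0 ?ltW // Lfin // ltW // l0 le.
    rewrite -(fineK Lf) lee_fin ler_pdivlMr // mulrC.
    by [].
  rewrite lee_fin; apply: (cvgr_to_ge Hcvg); near=> h; apply: key.
  apply/andP; split; near: h; [exact: nbhs_right_gt|exact: nbhs_right_lt].
-
  exfalso.
  have pinf : (\int[Q]_x f^\+ x = +oo)%E.
    move: EI; rewrite EIr; move: hp0 hn0.
    case: (\int[Q]_x f^\+ x)%E => [a| |] //; case: (\int[Q]_x f^\- x)%E => [b| |] //.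
  set l := e / 2.
  have l0 : 0 < l by rewrite divr_gt0.
  have le : l < e by rewrite ltr_pdivrMr // ltr_pMr // ltr1n.
  have := HQ l l0; rewrite /cgf.
  have -> : (\int[Q]_x expeR (l%:E * f x) = +oo)%E.
    apply/eqP; rewrite eq_le leey /=.
    have -> : (+oo = l%:E * \int[Q]_x f^\+ x)%E by rewrite pinf gt0_muley ?lte_fin.
    have fp0 : forall x, [set: T] x -> (0 <= f^\+ x)%E.
      by move=> x _; rewrite funeposE le_max lexx orbT.
    rewrite -(ge0_integralZl_EFin Q measurableT fp0 mfp); last exact: ltW.
    apply: ge0_le_integral => //.
    - move=> x Hx; apply: mule_ge0; [by rewrite lee_fin ltW|exact: fp0].
    - exact: measurable_funeM.
    - exact: meas_expeR.
    - by move=> x _; rewrite funeposE; apply: pt_pos.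
  move=> /= H.
  have Lfl : (Lam l < +oo)%E by apply: Lfin; rewrite (ltW l0) le.
  by move: H; rewrite leye_eq => /eqP HH; rewrite HH in Lfl.
Unshelve. all: by end_near.
Qed.
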